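(* Let $G=(V,E)$ and $H=(U,F)$ be finite simple graphs, each with $n$ vertices. Then the uniqueness tree algorithm (tree generation stage followed by tree comparison stage, as described in the context) applied to $G$ and $H$ runs in time $O(n^7)$ in the worst case.
   Context: A simple graph is a finite, unweighted, undirected graph with no loops or multiple edges; the size $n$ of a graph is its number of vertices. The uniqueness tree algorithm, applied to two graphs $G=(V,E)$ and $H=(U,F)$ of size $n$, consists of two stages. Tree generation stage: for each graph and each vertex $v$ of it, build a rooted tree $T(v)$ whose nodes are labelled by vertices of the graph, level by level. Level $0$ consists of the root, labelled $v$. Given the current level, a node of that level is called unique if its label occurs exactly once among the labels of the nodes of that level. Each non-unique node becomes a leaf (no children); each unique node labelled $u$ receives one child for each neighbour $w$ of $u$ in the graph, labelled $w$; these children form the next level. This is repeated while some node on the current level is unique and the height of $T(v)$ is less than $n$. Tree comparison stage: initially no vertex is mapped. For each unmapped $v\in V$ and, in turn, each unmapped $u\in U$, declare $v$ and $u$ equivalent unless one of the following holds: the heights of $T(v)$ and $T(u)$ differ; for some level, the numbers of nodes on that level of $T(v)$ and $T(u)$ differ; for some level and some $i\in\{1,\dots,n-1\}$, the number of nodes on that level having exactly $i$ children differs between $T(v)$ and $T(u)$. If $v$ and $u$ are equivalent, mark both as mapped (map $v$ onto $u$). At the end, output ''$G\cong H$'' if all vertices of $V$ and $U$ have been mapped, and ''$G\not\cong H$'' otherwise. *)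

(* Defs.v *)
From mathcomp Require Import all_boot.
Set Implicit Arguments. Unset Strict Implicit. Unset Printing Implicit Defensive.

Definition simple_graph (n : nat) (e : rel 'I_n) : Prop :=
  irreflexive e /\ symmetric e.

(* Neighbours of u, found by scanning the adjacency row (cost n). *)
Definition nbrs (n : nat) (e : rel 'I_n) (u : 'I_n) : seq 'I_n :=
  [seq w <- enum 'I_n | e u w].

(* A node of a level is unique iff its label occurs exactly once on the level
   (checked by scanning the level: cost = size of the level). *)
Definition is_unique (n : nat) (L : seq 'I_n) (x : 'I_n) : bool :=
  count_mem x L == 1.

(* A tree is stored level by level; a node is (label, number of children). *)
Definition level (n : nat) := seq ('I_n * nat).
Definition tree (n : nat) := seq (level n).

(* Tree generation.  [k] is the height of the current level [L].
   Returns the levels from [L] on, together with the number of elementary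
   steps performed (naive implementation: uniqueness test of every node by
   scanning the level, children by scanning the adjacency row). *)
Fixpoint gen_levels (n : nat) (e : rel 'I_n) (fuel k : nat) (L : seq 'I_n)
  : tree n * nat :=
  let uniq_cost := size L * size L in
  let leaves := [seq (x, 0) | x <- L] in
  match fuel with
  | 0 => ([:: leaves], uniq_cost)
  | fuel'.+1 =>
    if (k < n) && has (is_unique L) L then
      let cur := [seq (x, if is_unique L x then size (nbrs e x) else 0) | x <- L] in
      let next := flatten [seq (if is_unique L x then nbrs e x else [::]) | x <- L] in
      let step_cost := uniq_cost + size L * n in
      if next is [::] then ([:: cur], step_cost)
      else let: (rest, c) := gen_levels e fuel' k.+1 next in
           (cur :: rest, step_cost + c)
    else ([:: leaves], uniq_cost)
  end.

(* T(v), with its generation cost.  Fuel n suffices: the height never exceeds n. *)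
Definition uniqueness_tree (n : nat) (e : rel 'I_n) (v : 'I_n) : tree n * nat :=
  gen_levels e n 0 [:: v].

Definition height (n : nat) (T : tree n) : nat := (size T).-1.

Definition nchildren_count (n : nat) (L : level n) (i : nat) : nat :=
  count (fun p : 'I_n * nat => p.2 == i) L.

(* Equivalence test of two trees, with its cost: for every level, its size
   and, for each i in 1..n-1, the number of its nodes with i children are
   computed by scanning the level. *)
Definition tree_equiv (n : nat) (T1 T2 : tree n) : bool * nat :=
  let lv := iota 0 (minn (size T1) (size T2)) in
  let res :=
    (height T1 == height T2) &&
    all (fun j =>
           let L1 := nth [::] T1 j in let L2 := nth [::] T2 j in
           (size L1 == size L2) &&
           all (fun i => nchildren_count L1 i == nchildren_count L2 i)
               (iota 1 n.-1)) lv in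
  let cost := 1 + sumn [seq ((size (nth [::] T1 j) + size (nth [::] T2 j)) * n.+1)
                       | j <- lv] in
  (res, cost).

(* For a fixed v (tree Tv): try in turn each unmapped u; map v onto the first
   equivalent one.  Returns updated "u mapped" flags, whether v got mapped,
   and the cost. *)
Fixpoint try_map (n : nat) (Tv : tree n) (TU : seq (tree n)) (mU : seq bool)
  : seq bool * bool * nat :=
  match TU, mU with
  | Tu :: TU', m :: mU' =>
    if m then
      let: (mU2, f, c) := try_map Tv TU' mU' in (m :: mU2, f, c.+1)
    else
      let: (eqb, c0) := tree_equiv Tv Tu in
      if eqb then (true :: mU', true, c0.+1)
      else let: (mU2, f, c) := try_map Tv TU' mU' in (m :: mU2, f, (c0 + c).+1)
  | _, _ => (mU, false, 0)
  end.

(* Comparison stage: process the v's in order; returns (v mapped flags,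
   u mapped flags, cost). *)
Fixpoint compare_stage (n : nat) (TV TU : seq (tree n)) (mU : seq bool)
  : seq bool * seq bool * nat :=
  match TV with
  | [::] => ([::], mU, 0)
  | Tv :: TV' =>
    let: (mU1, f, c1) := try_map Tv TU mU in
    let: (mV, mU2, c2) := compare_stage TV' TU mU1 in
    (f :: mV, mU2, c1 + c2)
  end.

(* The whole algorithm: returns (answer "G ≅ H", total number of steps). *)
Definition uta_run (n : nat) (eG eH : rel 'I_n) : bool * nat :=
  let gG := [seq uniqueness_tree eG v | v <- enum 'I_n] in
  let gH := [seq uniqueness_tree eH u | u <- enum 'I_n] in
  let gen_cost := sumn (map snd gG) + sumn (map snd gH) in
  let: (mV, mU, ccost) := compare_stage (map fst gG) (map fst gH) (nseq n false) in
  (all id mV && all id mU, gen_cost + ccost + (size mV + size mU)).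

(* Main.v *)
Require Import Defs.
From mathcomp Require Import all_boot.
From mathcomp Require Import zify.

Section Aux.
Variable n : nat.
Variable e : rel 'I_n.

Lemma size_nbrs u : size (nbrs e u) <= n.
Proof.
rewrite /nbrs size_filter.
by apply: leq_trans (count_size _ _) _; rewrite size_enum_ord.
Qed.

Lemma count_unique_le (L : seq 'I_n) : count (is_unique L) L <= n.
Proof.
rewrite -size_filter.
apply: (@leq_trans (size (enum 'I_n))); last by rewrite size_enum_ord.
apply: uniq_leq_size; last by move=> x _; rewrite mem_enum.
apply: count_mem_uniq => x.
rewrite count_filter mem_filter.
case ux: (is_unique L x) => /=.
- have -> : count (predI (pred1 x) (is_unique L)) L = count_mem x L.
    by apply: eq_count => y /=; case: eqP => // ->; rewrite ux.
  move: ux; rewrite /is_unique => /eqP c1.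
  rewrite c1; apply/esym; rewrite -has_pred1 has_count c1 //.
- apply/eqP; rewrite eqn0Ngt -has_count; apply/hasP => [[y _ /= /andP [/eqP yx uy]]].
  by rewrite yx ux in uy.
Qed.

Lemma size_next (p : pred 'I_n) (s : seq 'I_n) :
  sumn [seq size (if p x then nbrs e x else [::]) | x <- s] <= count p s * n.
Proof.
elim: s => //= x s IH; rewrite mulnDl.
apply: leq_add => //; case: (p x) => //=; rewrite mul1n; exact: size_nbrs.
Qed.

Lemma gen_bound fuel k (L : seq 'I_n) : 0 < n -> size L <= n * n ->
  let r := gen_levels e fuel k L in
  r.2 <= fuel.+1 * (n*n*(n*n) + n*n*n) /\ size r.1 <= fuel.+1 /\
  all (fun l : level n => size l <= n * n) r.1.
Proof.
move=> n0; elim: fuel k L => [|f IH] k L hL /=.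
  rewrite /= size_map hL /=; split => //; nia.
case: ifP => _; last first.
  rewrite /= size_map hL /=; split => //; nia.
set next := flatten _.
have hn : size next <= n * n.
  rewrite size_flatten /shape -map_comp.
  apply: leq_trans (size_next (is_unique L) L) _.
  by rewrite leq_mul2r count_unique_le orbT.
case: next hn => [|a b] hn /=.
  rewrite /= size_map hL /=; split => //; nia.
move: (IH k.+1 (a :: b) hn).
case: (gen_levels e f k.+1 (a :: b)) => T c /= [hc [hs ha]].
rewrite /= size_map hL /= ha; split; last by [].
nia.
Qed.

End Aux.

Lemma sumn_map_le (T : Type) (f : T -> nat) (s : seq T) b :
  (forall x, f x <= b) -> sumn (map f s) <= size s * b.
Proof. move=> h; elim: s => //= x s IH; rewrite mulSn; exact: leq_add. Qed.

Section Cmp.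
Set Implicit Arguments.
Variable n : nat.
Definition goodT (T : tree n) := size T <= n.+1 /\ all (fun l : level n => size l <= n * n) T.
Definition Eb := (1 + n.+1 * ((n * n + n * n) * n.+1)).+1.

Lemma nth_lvl (T : tree n) j : all (fun l : level n => size l <= n * n) T ->
  size (nth [::] T j) <= n * n.
Proof. elim: T j => [|l T IH] [|j] //= /andP [h1 h2]; [by [] | exact: IH]. Qed.

Lemma equiv_bound T1 T2 : goodT T1 -> goodT T2 -> (tree_equiv T1 T2).2 < Eb.
Proof.
move=> [s1 a1] [s2 a2]; rewrite /tree_equiv /Eb /= ltnS add1n ltnS.
apply: leq_trans (@sumn_map_le _ _ _ ((n * n + n * n) * n.+1) _) _.
  by move=> j; rewrite leq_mul2r (leq_add (@nth_lvl T1 j a1) (@nth_lvl T2 j a2)) orbT.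
rewrite size_iota leq_mul2r; apply/orP; right.
by rewrite geq_min s1.
Qed.

Local Arguments tree_equiv : simpl never.
Lemma try_map_cons (Tv Tu : tree n) TU m mU : try_map Tv (Tu :: TU) (m :: mU) =
    if m then let: (mU2, f, c) := try_map Tv TU mU in (m :: mU2, f, c.+1)
    else let: (eqb, c0) := tree_equiv Tv Tu in
      if eqb then (true :: mU, true, c0.+1)
      else let: (mU2, f, c) := try_map Tv TU mU in (m :: mU2, f, (c0 + c).+1).
Proof. by []. Qed.

Lemma try_map_bound Tv TU mU : goodT Tv -> (forall T, T \in TU -> goodT T) ->
  (try_map Tv TU mU).2 <= size TU * Eb /\ size (try_map Tv TU mU).1.1 = size mU.
Proof.
move=> hv; elim: TU mU => [|Tu TU IH] [|m mU] hU //.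
have hu : goodT Tu by apply: hU; rewrite inE eqxx.
have hU' : forall T, T \in TU -> goodT T by move=> T hT; apply: hU; rewrite inE hT orbT.
have hc0 := equiv_bound hv hu.
rewrite try_map_cons.
case E: (tree_equiv Tv Tu) hc0 => [b c0] /= hc.
case: m.
  move: (IH mU hU'); case: (try_map Tv TU mU) => [[mU2 f] c] /= [h1 h2].
  rewrite h2; split => //; rewrite mulSn; apply: leq_trans (_ : c.+1 <= 1 + size TU * Eb) _; [by rewrite add1n | by rewrite leq_add2r /Eb].
case: b E => E.
  split => //=; rewrite mulSn; exact: leq_trans hc (leq_addr _ _).
move: (IH mU hU'); case: (try_map Tv TU mU) => [[mU2 f] c] /= [h1 h2].
by rewrite h2; split => //; rewrite mulSn addSn; apply: leq_add.
Qed.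

Lemma compare_bound TV TU mU : (forall T, T \in TV -> goodT T) ->
  (forall T, T \in TU -> goodT T) ->
  let r := compare_stage TV TU mU in
  r.2 <= size TV * (size TU * Eb) /\ size r.1.1 = size TV /\ size r.1.2 = size mU.
Proof.
move=> hV hU; elim: TV mU hV => [|Tv TV IH] mU hV //=.
have hv : goodT Tv by apply: hV; rewrite inE eqxx.
have hV' : forall T, T \in TV -> goodT T by move=> T hT; apply: hV; rewrite inE hT orbT.
move: (@try_map_bound Tv TU mU hv hU); case: (try_map Tv TU mU) => [[mU1 f] c1] /= [h1 h2].
move: (IH mU1 hV'); case: (compare_stage TV TU mU1) => [[mV mU2] c2] /= [h3 [h4 h5]].
by rewrite h4 h5 h2; split => //; rewrite mulSn; apply: leq_add.
Qed.
End Cmp.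

Theorem theorem1 :
  exists C n0 : nat, forall n : nat, n0 <= n ->
    forall eG eH : rel 'I_n, simple_graph eG -> simple_graph eH ->
      (uta_run eG eH).2 <= C * n ^ 7.
Proof.
exists 20, 1 => n n1 eG eH _ _.
have gb : forall (e : rel 'I_n) v, goodT (uniqueness_tree e v).1 /\
    (uniqueness_tree e v).2 <= n.+1 * (n*n*(n*n) + n*n*n).
  move=> e v; have h1 : size [:: v] <= n * n by rewrite /=; nia.
  have := @gen_bound n e n 0 [:: v] n1 h1.
  rewrite /uniqueness_tree /goodT /=.
  by move=> [? [? ?]].
have gsum : forall e : rel 'I_n, sumn (map snd [seq uniqueness_tree e v | v <- enum 'I_n])
    <= n * (n.+1 * (n*n*(n*n) + n*n*n)).
  move=> e; rewrite -map_comp.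
  apply: leq_trans (@sumn_map_le _ _ _ (n.+1 * (n*n*(n*n) + n*n*n)) _) _.
    by move=> v /=; case: (gb e v).
  by rewrite size_enum_ord.
have gd : forall (e : rel 'I_n) T, T \in map fst [seq uniqueness_tree e v | v <- enum 'I_n] -> goodT T.
  move=> e T; rewrite -map_comp => /mapP [v _ ->]; by case: (gb e v).
rewrite /uta_run.
move: (@compare_bound n _ _ (nseq n false) (gd eG) (gd eH)).
case: (compare_stage _ _ _) => [[mV mU] cc] /= [hc [h1 h2]].
rewrite h1 h2 !size_map size_nseq -enumT size_enum_ord in hc *.
have g1 := gsum eG; have g2 := gsum eH.
rewrite /Eb in hc.
have -> : n ^ 7 = n * n * n * n * n * n * n by rewrite !expnS expn0 muln1 !mulnA.
nia.
Qed.
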